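(* There are constants $k$ and $C$ such that the following holds. Let $p>2$ be prime, $\Gamma_0$ a $3$-regular connected graph, $\Gamma_1 = \mathrm{CFI}(\Gamma_0)$, $\Gamma_2 = \widetilde{\mathrm{CFI}(\Gamma_0)}$, and for $i\in\{1,2\}$ let $G_i = G_{\Gamma_i}$ be the group from Mekler's construction, $n=|G_i|$. Let $u, v \in G_{i}$ with $|\mathrm{supp}(u)| = 1$ and $|\mathrm{supp}(v)| > 1$. In the count-free Version I pebble game on $(G_i, G_i)$, from a position in which $u \mapsto v$ has been pebbled, Spoiler can win using at most $k$ additional pebble pairs within $C\log \log n + C$ additional rounds.
   Context: CFI construction: for a connected graph $\Gamma_0$, each vertex $v$ of degree $d$ is replaced by a gadget with external vertices $a_1^v,b_1^v,\ldots,a_d^v,b_d^v$ (pair $i$ associated to the $i$-th edge at $v$) and internal vertices indexed by strings in $\{0,1\}^d$ with an even number of $1$'s, the internal vertex with string $s$ adjacent to $a_i^v$ if $s_i=0$ and to $b_i^v$ otherwise; for each edge $xy$ of $\Gamma_0$ with associated pairs $(a_i^x,b_i^x),(a_j^y,b_j^y)$ add edges $a_i^xa_j^y$, $b_i^xb_j^y$ to get $\mathrm{CFI}(\Gamma_0)$; $\widetilde{\mathrm{CFI}(\Gamma_0)}$ instead uses $a_i^xb_j^y$, $b_i^xa_j^y$ for one edge of $\Gamma_0$. Mekler's construction: for a simple graph $\Gamma$ on $v_1,\ldots,v_m$, $G_\Gamma = \langle x_1,\ldots,x_m \mid x_i^p=1, [[x_i,x_j],x_k]=1, [x_i,x_j]=1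 \text{ if } v_iv_j\in E(\Gamma)\rangle$; every element is $x_1^{d_1}\cdots x_m^{d_m}c$ with $c$ in the commutator subgroup and the $d_i$ unique mod $p$; $\mathrm{supp}(x)=\{v_i: d_i\not\equiv 0 \pmod p\}$. Count-free Version I pebble game on groups $G,H$: each round Spoiler picks up a pebble pair, the winning condition is checked, Spoiler places one pebble of the pair on an element of either group and Duplicator places the partner on an element of the other group; Spoiler wins when the map $g_i\mapsto h_i$ between pebbled elements fails to satisfy, for all $i,j,t$: $g_i=g_j\iff h_i=h_j$ and $g_ig_j=g_t\iff h_ih_j=h_t$. *)

(* Defs.v *)
From mathcomp Require Import all_boot all_order all_algebra.
Set Implicit Arguments. Unset Strict Implicit. Unset Printing Implicit Defensive.
Import GRing.Theory.
Local Open Scope ring_scope.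

Definition simple_graph (V : finType) (e : rel V) : Prop :=
  symmetric e /\ irreflexive e.
Definition cubic (V : finType) (e : rel V) : Prop :=
  forall v : V, #|[set w | e v w]| = 3%N.
Definition connected_graph (V : finType) (e : rel V) : Prop :=
  forall x y : V, connect e x y.

(* Instead of numbering the edges at v by 1..d, the
   i-th external pair at v is indexed by the neighbour w at the other end of
   the i-th edge:  a^v_w = inl (v,w,false),  b^v_w = inl (v,w,true).
   An internal vertex with string s in {0,1}^d (even number of 1's) is
   recorded as inr (v,S) with S = {w in N(v) | s_w = 1}, |S| even.       *)
Definition cfi_raw (V0 : finType) :=
  ((V0 * V0 * bool) + (V0 * {set V0}))%type.

Definition cfi_valid (V0 : finType) (e0 : rel V0) (z : cfi_raw V0) : bool :=
  match z with
  | inl (v, w, _) => e0 v w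
  | inr (v, A) => (A \subset [set w | e0 v w]) && ~~ odd #|A|
  end.

Definition cfi_vertex (V0 : finType) (e0 : rel V0) :=
  {z : cfi_raw V0 | cfi_valid e0 z}.

(* tw x y = true iff xy is the edge whose connections are twisted *)
Definition cfi_raw_rel (V0 : finType) (e0 : rel V0) (tw : V0 -> V0 -> bool)
  (z1 z2 : cfi_raw V0) : bool :=
  match z1, z2 with
  | inr (v, A), inl (x, w, b) => (v == x) && (b == (w \in A))
  | inl (x, w, b), inr (v, A) => (v == x) && (b == (w \in A))
  | inl (x, y, b), inl (y', x', b') =>
      [&& x == x', y == y', e0 x y & b' == b (+) tw x y]
  | inr _, inr _ => false
  end.

Definition cfi_rel (V0 : finType) (e0 : rel V0) (tw : V0 -> V0 -> bool) :
  rel (cfi_vertex e0) := fun z1 z2 => cfi_raw_rel e0 tw (val z1) (val z2).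

Definition no_twist (V0 : finType) : V0 -> V0 -> bool := fun _ _ => false.
(* the twisted version: edge x0y0 uses a_x0 b_y0, b_x0 a_y0 *)
Definition twist_at (V0 : finType) (x0 y0 : V0) : V0 -> V0 -> bool :=
  fun x y => ((x == x0) && (y == y0)) || ((x == y0) && (y == x0)).

(* Mekler's group G_Gamma, p an odd prime, given in its normal form
   x_1^{d_1} ... x_m^{d_m} c.  Vertices are ordered by enum_rank.  The
   commutator subgroup is elementary abelian with basis the [x_b, x_a] for
   a < b non-adjacent; these index pairs form the type [mek_nonedge e].
   An element is a pair (d, c) with d : V -> Z_p and c the exponents of
   the basic commutators.  Multiplication:
     x^d c * x^d' c' = x^(d+d') c c' prod_{a<b} [x_b,x_a]^(d_b d'_a).     *)
Definition nonedge (V : finType) (e : rel V) (ab : V * V) : bool :=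
  (enum_rank ab.1 < enum_rank ab.2)%N && ~~ e ab.1 ab.2.

Definition mek_nonedge (V : finType) (e : rel V) := {ab : V * V | nonedge e ab}.

Definition mekler (p : nat) (V : finType) (e : rel V) :=
  ({ffun V -> 'Z_p} * {ffun mek_nonedge e -> 'Z_p})%type.

Definition mekler_mul (p : nat) (V : finType) (e : rel V)
  (g h : mekler p e) : mekler p e :=
  ([ffun a => g.1 a + h.1 a],
   [ffun k : mek_nonedge e => g.2 k + h.2 k + g.1 (val k).2 * h.1 (val k).1]).

Definition supp (p : nat) (V : finType) (e : rel V) (g : mekler p e) : {set V} :=
  [set a | g.1 a != 0].

(* Count-free Version I pebble game on (G,H), with one pebble pair fixed on
   (u,v) and k additional pebble pairs, indexed by 'I_k.  A position for
   the additional pairs records, for each pair, None (off the board) or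
   Some (g,h).                                                          *)
Definition pebbled (G H : eqType) (k : nat) (fixed : G * H)
  (pos : 'I_k -> option (G * H)) : seq (G * H) :=
  fixed :: pmap pos (enum 'I_k).

Definition pebble_iso (G H : eqType) (mulG : G -> G -> G) (mulH : H -> H -> H)
  (L : seq (G * H)) : Prop :=
  forall a b c, a \in L -> b \in L -> c \in L ->
    ((a.1 == b.1) = (a.2 == b.2)) /\
    ((mulG a.1 b.1 == c.1) = (mulH a.2 b.2 == c.2)).

Definition upd (k : nat) (X : Type) (f : 'I_k -> X) (i : 'I_k) (x : X) :
  'I_k -> X := fun j => if j == i then x else f j.

(* In each
   round Spoiler picks up a pair i, the winning condition is checked on the
   remaining pebbled pairs, then Spoiler places pebble i on some element of
   either group and Duplicator answers in the other group.              *)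
Fixpoint spoiler_wins (G H : eqType) (mulG : G -> G -> G) (mulH : H -> H -> H)
  (k : nat) (fixed : G * H) (r : nat) (pos : 'I_k -> option (G * H)) : Prop :=
  match r with
  | 0 => False
  | r'.+1 =>
      exists i : 'I_k,
        let pos' := upd pos i None in
        ~ pebble_iso mulG mulH (pebbled fixed pos') \/
        (exists x : G, forall y : H,
            spoiler_wins mulG mulH fixed r' (upd pos' i (Some (x, y)))) \/
        (exists y : H, forall x : G,
            spoiler_wins mulG mulH fixed r' (upd pos' i (Some (x, y))))
  end.

Definition empty_pos (k : nat) (X : Type) : 'I_k -> option X := fun _ => None.

(* Main.v *)
Require Import Defs.
From mathcomp Require Import all_boot all_order all_algebra.
Set Implicit Arguments. Unset Strict Implicit. Unset Printing Implicit Defensive.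
Import GRing.Theory.
Local Open Scope ring_scope.

Lemma Zp_unit (p : nat) (x : 'Z_p) : prime p -> x != 0 -> x \is a GRing.unit.
Proof.
move=> pp x0; have p1 := prime_gt1 pp.
rewrite -[x]natr_Zp unitZpE // prime_coprime //.
have xlt : (x < p)%N by rewrite -{2}(Zp_cast p1) ltn_ord.
have xpos : (0 < x)%N.
  rewrite lt0n; apply: contra x0 => /eqP h; apply/eqP; exact: val_inj.
by apply/negP => /(dvdn_leq xpos); rewrite leqNgt xlt.
Qed.
Section Mek.
Variables (p : nat) (V : finType) (e : rel V).
Hypothesis esymm : symmetric e.

Lemma comm_pair (g h : mekler p e) : mekler_mul g h = mekler_mul h g ->
  forall a b, a != b -> ~~ e a b -> g.1 b * h.1 a = h.1 b * g.1 a.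
Proof.
move=> H a b ab nab.
have H2 := congr1 snd H; rewrite /mekler_mul /= in H2.
have [lt|ge] := ltnP (enum_rank a) (enum_rank b).
  have nk : nonedge e (a, b) by rewrite /nonedge /= lt nab.
  move/ffunP: H2 => /(_ (exist _ (a, b) nk)); rewrite !ffunE /=.
  by rewrite [h.2 _ + _]addrC => /addrI.
have lt : (enum_rank b < enum_rank a)%N.
  rewrite ltn_neqAle ge andbT; apply/negP => /eqP ba.
  by have := enum_rank_inj (val_inj ba) => bae; rewrite bae eqxx in ab.
have nk : nonedge e (b, a) by rewrite /nonedge /= lt esymm nab.
move/ffunP: H2 => /(_ (exist _ (b, a) nk)); rewrite !ffunE /=.
rewrite [h.2 _ + _]addrC => /addrI.
by move=> E; rewrite mulrC -E mulrC.
Qed.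

Lemma pair_comm (g h : mekler p e) :
  (forall a b, a != b -> ~~ e a b -> g.1 b * h.1 a = h.1 b * g.1 a) ->
  mekler_mul g h = mekler_mul h g.
Proof.
move=> H; rewrite /mekler_mul; congr (_, _); apply/ffunP => k; rewrite !ffunE.
  by rewrite addrC.
case: k => [[a b] Hk] /=; move/andP: (Hk) => [lt nab] /=.
rewrite [h.2 _ + _]addrC H //; apply: contraTneq lt => ->; by rewrite ltnn.
Qed.
Hypothesis pp : prime p.
Hypothesis C4 : forall s t c d, s != t -> e s c -> e t c -> e s d -> e t d -> c = d.

Definition mcomm (g h : mekler p e) := mekler_mul g h = mekler_mul h g.

Lemma kill (v y : mekler p e) a c : mcomm y v -> v.1 a != 0 -> v.1 c = 0 ->
  ~~ e a c -> y.1 c = 0.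
Proof.
move=> H va vc nac.
have ac : a != c by apply: contraNneq va => ->; rewrite vc.
have E := comm_pair H ac nac; rewrite vc mul0r in E.
by rewrite -(mulrK (Zp_unit pp va) (y.1 c)) E mul0r.
Qed.

Lemma abel (v y y' : mekler p e) : (1 < #|supp v|)%N ->
  mcomm y v -> mcomm y' v -> mcomm y y'.
Proof.
move=> /card_gt1P [a1 [a2 [a1S a2S a12]]] Hy Hy'.
rewrite !inE in a1S a2S.
apply: pair_comm => c d cd ncd.
have [vc0|vc] := eqVneq (v.1 c) 0; have [vd0|vd] := eqVneq (v.1 d) 0.
- have [/andP [a1c a2c]|nc] := boolP (e a1 c && e a2 c).
    have [/andP [a1d a2d]|nd] := boolP (e a1 d && e a2 d).
      by rewrite (C4 a12 a1c a2c a1d a2d) eqxx in cd.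
    have [a nad va] : exists2 a, ~~ e a d & v.1 a != 0.
      by move: nd; rewrite negb_and => /orP [] h; [exists a1 | exists a2].
    by rewrite (kill Hy va vd0 nad) (kill Hy' va vd0 nad) !mul0r.
  have [a nac va] : exists2 a, ~~ e a c & v.1 a != 0.
    by move: nc; rewrite negb_and => /orP [] h; [exists a1 | exists a2].
  by rewrite (kill Hy va vc0 nac) (kill Hy' va vc0 nac) !mulr0.
- have ndc : ~~ e d c by rewrite esymm.
  by rewrite (kill Hy vd vc0 ndc) (kill Hy' vd vc0 ndc) !mulr0.
- by rewrite (kill Hy vc vd0 ncd) (kill Hy' vc vd0 ncd) !mul0r.
have E := comm_pair Hy cd ncd; have E' := comm_pair Hy' cd ncd.
apply: (mulIr (Zp_unit pp vd)).
by rewrite -!mulrA [y'.1 c * _]mulrC [y.1 c * _]mulrC -E' -E !mulrA [y.1 d * _]mulrC.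
Qed.

Definition xgen (b : V) : mekler p e := ([ffun z => (z == b)%:R], [ffun => 0]).

Lemma xgen_comm (u : mekler p e) a b : (forall z, z != a -> u.1 z = 0) ->
  e a b -> mcomm (xgen b) u.
Proof.
move=> ua eab; apply: pair_comm => c d cd ncd; rewrite !ffunE.
have -> : (d == b)%:R * u.1 c = 0 :> 'Z_p.
  have [db|db] := eqVneq d b; last by rewrite mul0r.
  have [ca|ca] := eqVneq c a; first by rewrite ca db eab in ncd.
  by rewrite ua // mulr0.
have [cb|cb] := eqVneq c b; last by rewrite mulr0.
have [da|da] := eqVneq d a; first by rewrite da cb esymm eab in ncd.
by rewrite ua // mul0r.
Qed.

Lemma xgen_ncomm b b' : b != b' -> ~~ e b b' -> mekler_mul (xgen b) (xgen b') != mekler_mul (xgen b') (xgen b).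
Proof.
move=> bb nbb; apply/eqP => /comm_pair /(_ b b' bb nbb).
rewrite !ffunE /= !eqxx eq_sym (negbTE bb) mul0r mulr1 => /esym/eqP.
by rewrite oner_eq0.
Qed.
End Mek.
Local Close Scope ring_scope.
Lemma mem_pebbled (G H : eqType) (k : nat) (fx : G * H) (pos : 'I_k -> option (G * H)) j q :
  pos j = Some q -> q \in pebbled fx pos.
Proof.
move=> E; rewrite /pebbled inE mem_pmap; apply/orP; right.
by apply/mapP; exists j; rewrite ?mem_enum ?E.
Qed.

Lemma wins_mono (G H : eqType) mulG mulH (k : nat) (fx : G * H) r r' (pos : 'I_k -> option (G * H)) :
  (r <= r')%N -> @spoiler_wins G H mulG mulH k fx r pos ->
  spoiler_wins mulG mulH fx r' pos.
Proof.
elim: r r' pos => [|r IH] [|r'] pos //= le [i [h|[[x h]|[y h]]]].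
- by exists i; left.
- by exists i; right; left; exists x => y; apply: IH (h y).
- by exists i; right; right; exists y => x; apply: IH (h x).
Qed.

Lemma strategy (G : eqType) (mul : G -> G -> G) (u v h1 h2 : G) :
  mul h1 u = mul u h1 -> mul h2 u = mul u h2 -> mul h1 h2 != mul h2 h1 ->
  (forall y1 y2, mul y1 v = mul v y1 -> mul y2 v = mul v y2 ->
     mul y1 y2 = mul y2 y1) ->
  spoiler_wins mul mul (u, v) 6 (@empty_pos 6 (G * G)).
Proof.
move=> c1 c2 n12 ab.
exists (@Ordinal 6 0 isT); right; left; exists h1 => y1.
exists (@Ordinal 6 1 isT); right; left; exists h2 => y2.
exists (@Ordinal 6 2 isT); right; left; exists (mul h1 u) => z1.
exists (@Ordinal 6 3 isT); right; left; exists (mul h2 u) => z2.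
exists (@Ordinal 6 4 isT); right; left; exists (mul h1 h2) => z3.
exists (@Ordinal 6 5 isT); left => Hiso.
set pos := upd _ _ _ in Hiso.
have m0 : (u, v) \in pebbled (u, v) pos by rewrite inE eqxx.
have m1 : (h1, y1) \in pebbled (u, v) pos by apply: (@mem_pebbled _ _ _ _ pos (@Ordinal 6 0 isT)).
have m2 : (h2, y2) \in pebbled (u, v) pos by apply: (@mem_pebbled _ _ _ _ pos (@Ordinal 6 1 isT)).
have m3 : (mul h1 u, z1) \in pebbled (u, v) pos by apply: (@mem_pebbled _ _ _ _ pos (@Ordinal 6 2 isT)).
have m4 : (mul h2 u, z2) \in pebbled (u, v) pos by apply: (@mem_pebbled _ _ _ _ pos (@Ordinal 6 3 isT)).
have m5 : (mul h1 h2, z3) \in pebbled (u, v) pos by apply: (@mem_pebbled _ _ _ _ pos (@Ordinal 6 4 isT)).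
have [_ /= E1] := Hiso _ _ _ m1 m0 m3; rewrite eqxx in E1.
have [_ /= E1'] := Hiso _ _ _ m0 m1 m3; rewrite -c1 eqxx in E1'.
have [_ /= E2] := Hiso _ _ _ m2 m0 m4; rewrite eqxx in E2.
have [_ /= E2'] := Hiso _ _ _ m0 m2 m4; rewrite -c2 eqxx in E2'.
have [_ /= E3] := Hiso _ _ _ m1 m2 m5; rewrite eqxx in E3.
have [_ /= E3'] := Hiso _ _ _ m2 m1 m5; rewrite eq_sym (negbTE n12) in E3'.
move: E1 E1' E2 E2' E3 E3' => /esym/eqP E1 /esym/eqP E1' /esym/eqP E2 /esym/eqP E2'
  /esym/eqP E3 /esym/negbT/eqP E3'.
apply: E3'; rewrite -E3; apply: ab; congruence.
Qed.
Lemma par (V0 : finType) (N A A' : {set V0}) w1 w2 : #|N| = 3 ->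
  A \subset N -> A' \subset N -> ~~ odd #|A| -> ~~ odd #|A'| ->
  w1 \in N -> w2 \in N -> w1 != w2 ->
  (w1 \in A) = (w1 \in A') -> (w2 \in A) = (w2 \in A') -> A = A'.
Proof.
move=> N3 AN A'N oA oA' w1N w2N w12 e1 e2.
set D := (A :\: A') :|: (A' :\: A).
have DN : D \subset N :\: [set w1; w2].
  apply/subsetP => x; rewrite !inE => Dx.
  have xN : x \in N.
    by case/orP: Dx => /andP [_ h]; [apply: (subsetP AN) | apply: (subsetP A'N)].
  rewrite xN andbT negb_or; apply/andP; split; apply: contraTneq Dx => ->;
  rewrite ?e1 ?e2; by [case: (w1 \in A') | case: (w2 \in A')].
have cN : #|N :\: [set w1; w2]| = 1%N.
  rewrite cardsD; have -> : N :&: [set w1; w2] = [set w1; w2].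
    by apply/setIidPr/subsetP => x; rewrite !inE => /orP [] /eqP ->.
  by rewrite cards2 w12 N3.
have D1 := subset_leq_card DN; rewrite cN in D1.
have cD : #|D| = (#|A :\: A'| + #|A' :\: A|)%N.
  rewrite cardsU; have -> : (A :\: A') :&: (A' :\: A) = set0.
    by apply/setP => x; rewrite !inE; case: (x \in A); case: (x \in A'); rewrite ?andbF.
  by rewrite cards0 subn0.
have cA := cardsID A' A; have cA' := cardsID A A'.
rewrite setIC in cA'.
have oD : ~~ odd #|D|.
  move: oA oA'; rewrite cD -cA -cA' !oddD.
  by case: (odd #|A :&: A'|); case: (odd #|A :\: A'|); case: (odd #|A' :\: A|).
have D0 : #|D| = 0%N by move: D1 oD; case: #|D| => [|[|]].
move/eqP: D0; rewrite cards_eq0 => /eqP D0.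
apply/setP => x; apply/idP/idP => hx; apply: contraT => hx'.
- have : x \in D by rewrite !inE hx hx'.
  by rewrite D0 inE.
- have : x \in D by rewrite !inE hx hx'.
  by rewrite D0 inE.
Qed.
Ltac breakall := repeat match goal with
  | H : is_true (_ && _) |- _ => case/andP: H
  | H : is_true false |- _ => discriminate H
  | H : is_true (_ == _) |- _ => move/eqP: H => H
  | |- _ -> _ => move=> ?
  end; subst.

Ltac contr := exfalso; match goal with H : _ <> _ |- _ => by apply: H end.

Lemma raw_C4 (V0 : finType) (e0 : rel V0) tw (s t c d : cfi_raw V0) :
  (forall v, #|[set w | e0 v w]| = 3) ->
  cfi_valid e0 s -> cfi_valid e0 t -> cfi_valid e0 c -> cfi_valid e0 d ->
  s <> t -> cfi_raw_rel e0 tw s c -> cfi_raw_rel e0 tw t c ->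
  cfi_raw_rel e0 tw s d -> cfi_raw_rel e0 tw t d -> c = d.
Proof.
move=> cub.
case: s => [[[sx sy] sb]|[sv sA]]; case: t => [[[tx ty] tb]|[tv tA]];
case: c => [[[cx cy] cb]|[cv cA]]; case: d => [[[dx dy] db]|[dv dA]] /=;
breakall.
all: try reflexivity.
all: try contr.
all: match goal with
  | H1 : is_true (?A \subset _), H2 : is_true (?B \subset _),
    o1 : is_true (~~ odd #|?A|), o2 : is_true (~~ odd #|?B|),
    E1 : (?w1 \in ?A) = (?w1 \in ?B), E2 : (?w2 \in ?A) = (?w2 \in ?B) |- _ =>
    have [ww|ww] := eqVneq w1 w2;
    [ subst; try reflexivity; contr
    | have AB := par (cub _) H1 H2 o1 o2 (w1:=w1) (w2:=w2)
         ltac:(by rewrite inE) ltac:(by rewrite inE) ww E1 E2;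
      subst; try reflexivity; contr ]
  end.
Qed.

Lemma raw_sym (V0 : finType) (e0 : rel V0) tw : symmetric e0 ->
  (forall x y, tw x y = tw y x) ->
  forall z1 z2 : cfi_raw V0, cfi_raw_rel e0 tw z1 z2 = cfi_raw_rel e0 tw z2 z1.
Proof.
move=> es ts z1 z2.
case: z1 => [[[x y] b]|[v A]]; case: z2 => [[[x' y'] b']|[v' A']] //=.
apply/idP/idP; breakall; rewrite !eqxx /= -addbA (ts _ _) addbb addbF eqxx andbT;
  first [by [] | by rewrite es].
Qed.

Lemma two_nb (V0 : finType) (N : {set V0}) w : #|N| = 3 -> 
  exists w1 w2, [/\ w1 \in N, w2 \in N, w1 != w2, w1 != w & w2 != w].
Proof.
move=> N3; have : (1 < #|N :\ w|)%N.
  have := cardsD1 w N; rewrite N3; case: (w \in N) => /= h;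
  by move: h; case: #|N :\ w| => [|[|[|m]]] // /eqP.
move/card_gt1P => [w1 [w2 [h1 h2 h12]]]; move: h1 h2; rewrite !inE.
move=> /andP [h1 n1] /andP [h2 n2]; by exists w1, w2; rewrite h12 n1 n2 h1 h2.
Qed.

Lemma raw_nb (V0 : finType) (e0 : rel V0) tw (z : cfi_raw V0) :
  irreflexive e0 -> (forall v, #|[set w | e0 v w]| = 3) -> cfi_valid e0 z ->
  exists b1 b2 : cfi_raw V0, [/\ cfi_valid e0 b1, cfi_valid e0 b2, b1 != b2 &
    [/\ cfi_raw_rel e0 tw z b1, cfi_raw_rel e0 tw z b2 & ~~ cfi_raw_rel e0 tw b1 b2]].
Proof.
move=> irr cub; case: z => [[[v w] bit]|[v A]] /= Hz.
- have [w1 [w2 [h1 h2 h12 n1 n2]]] := two_nb w (cub v).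
  rewrite !inE in h1 h2.
  exists (inr (v, if bit then [set w; w1] else set0)),
         (inr (v, if bit then [set w; w2] else [set w1; w2])).
  case: bit => /=; rewrite !eqxx /=.
  + rewrite !cards2 eq_sym n1 eq_sym n2 /= !inE !eqxx /= ?andbT.
    (split; [..|split]) => //.
    * by apply/subsetP => x; rewrite !inE => /orP [] /eqP ->.
    * by apply/subsetP => x; rewrite !inE => /orP [] /eqP ->.
    * apply/eqP => [[]] /setP /(_ w1); rewrite !inE !eqxx orbT.
      by rewrite (negbTE n1) (negbTE h12).
  + rewrite cards0 cards2 h12 /= !inE ?andbT.
    (split; [..|split]) => //.
    * by apply/subsetP => x; rewrite !inE.
    * by apply/subsetP => x; rewrite !inE => /orP [] /eqP ->.
    * apply/eqP => [[]] /setP /(_ w1); by rewrite !inE !eqxx.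
    * by rewrite ![w == _]eq_sym (negbTE n1) (negbTE n2).
- have := cub v; move=> c3.
  have : (1 < #|[set w | e0 v w]|)%N by rewrite c3.
  move/card_gt1P => [w1 [w2 [h1 h2 h12]]]; rewrite !inE in h1 h2.
  exists (inl (v, w1, w1 \in A)), (inl (v, w2, w2 \in A)) => /=.
  rewrite h1 h2 !eqxx /=; (split; [..|split]) => //.
  + by apply/eqP => [[]] /eqP; rewrite (negbTE h12).
  + apply/negP => /andP [/eqP vw2 _]; by rewrite -vw2 irr in h2.
Qed.


Theorem lemma4p19 :
  exists k C : nat,
  forall (p : nat), prime p -> (2 < p)%N ->
  forall (V0 : finType) (e0 : rel V0),
    simple_graph e0 -> cubic e0 -> connected_graph e0 ->
  forall (x0 y0 : V0), e0 x0 y0 ->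
  forall (twisted : bool),
    let tw := if twisted then twist_at x0 y0 else @no_twist V0 in
    let G := mekler p (@cfi_rel V0 e0 tw) in
    let n := #|{: G}| in
  forall u v : G,
    #|supp u| = 1%N -> (1 < #|supp v|)%N ->
    spoiler_wins (@mekler_mul p _ (@cfi_rel V0 e0 tw)) (@mekler_mul p _ (@cfi_rel V0 e0 tw))
      (u, v) (C * trunc_log 2 (trunc_log 2 n) + C) (@empty_pos k (G * G)).
Proof.
exists 6, 6 => p pp p2 V0 e0 [es irr] cub _ x0 y0 _ twisted tw G n u v su sv.
have ts : forall x y, tw x y = tw y x.
  move=> x y; rewrite /tw; case: (twisted) => //=; rewrite /twist_at.
  by case: (x == x0); case: (y == y0); case: (x == y0); case: (y == x0).
set E := @cfi_rel V0 e0 tw.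
have Esym : symmetric E by move=> a b; rewrite /E /cfi_rel raw_sym.
have EC4 : forall s t c d, s != t -> E s c -> E t c -> E s d -> E t d -> c = d.
  move=> s t c d st h1 h2 h3 h4; apply: val_inj.
  apply: (raw_C4 cub (valP s) (valP t) (valP c) (valP d) _ h1 h2 h3 h4).
  by move=> /val_inj st'; rewrite st' eqxx in st.
have [a sua] := cards1P (introT eqP su).
have ua : forall z, z != a -> u.1 z = 0%R.
  move=> z za; apply/eqP; apply: contraNT za => h.
  have : z \in supp u by rewrite inE.
  by rewrite sua inE.
have [b1 [b2 [v1 v2 b12 [r1 r2 nr]]]] := raw_nb tw irr cub (valP a).
pose B1 : cfi_vertex e0 := exist _ b1 v1.
pose B2 : cfi_vertex e0 := exist _ b2 v2.
have B12 : B1 != B2 by apply: contra b12 => /eqP [->].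
have c1 := @xgen_comm p _ E Esym u a B1 ua r1.
have c2 := @xgen_comm p _ E Esym u a B2 ua r2.
have n12 := @xgen_ncomm p _ E Esym B1 B2 B12 nr.
have ab : forall y1 y2 : G, mekler_mul y1 v = mekler_mul v y1 ->
    mekler_mul y2 v = mekler_mul v y2 -> mekler_mul y1 y2 = mekler_mul y2 y1.
  by move=> y1 y2; apply: (abel Esym pp EC4 sv).
apply: (wins_mono _ (strategy c1 c2 n12 ab)).
by rewrite leq_addl.
Qed.
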